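(* If $M$ is a matroid of rank $r\geq 2$, then $M$ is simple if and only if $M$ is $(r-1,1)$-uniform.
   Context: For positive integers $k,\ell$, a matroid is $(k,\ell)$-uniform if it has no minor isomorphic to $U_{k,k}\oplus U_{0,\ell}$. *)

(* Defs.v *)
From mathcomp Require Import all_boot.
Set Implicit Arguments. Unset Strict Implicit. Unset Printing Implicit Defensive.

Section Matroids.
Variable T : finType.

Definition is_matroid (E : {set T}) (I : pred {set T}) : Prop :=
  [/\ I set0,
      (forall X : {set T}, I X -> X \subset E),
      (forall X Y : {set T}, Y \subset X -> I X -> I Y)
    & (forall X Y : {set T}, I X -> I Y -> #|X| < #|Y| ->
         exists2 y, y \in Y :\: X & I (y |: X))].

Definition rk (I : pred {set T}) (X : {set T}) : nat :=
  \max_(Y : {set T} | (Y \subset X) && I Y) #|Y|.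

Definition mrank (E : {set T}) (I : pred {set T}) : nat := rk I E.

Definition circuit (E : {set T}) (I : pred {set T}) (C : {set T}) : Prop :=
  [/\ C \subset E, ~~ I C & forall x, x \in C -> I (C :\ x)].

(* simple: no loops (circuits of size 1) and no parallel pairs (circuits of size 2) *)
Definition simple (E : {set T}) (I : pred {set T}) : Prop :=
  forall C : {set T}, circuit E I C -> 2 < #|C|.

(* minor M / C \ D : ground set E \ (C u D), X independent iff r(X u C) = |X| + r(C) *)
Definition minor_ground (E C D : {set T}) : {set T} := E :\: (C :|: D).
Definition minor_indep (E : {set T}) (I : pred {set T}) (C D : {set T}) : pred {set T} :=
  fun X => (X \subset minor_ground E C D) && (rk I (X :|: C) == #|X| + rk I C).

End Matroids.

Definition matroid_iso (T T' : finType) (E : {set T}) (I : pred {set T})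
    (E' : {set T'}) (I' : pred {set T'}) : Prop :=
  exists f : T -> T',
    [/\ {in E &, injective f}, f @: E = E'
      & forall X : {set T}, X \subset E -> I X = I' (f @: X)].

Definition unif_indep (r n : nat) : pred {set 'I_n} := fun X => #|X| <= r.

Definition dsum_ground (T1 T2 : finType) (E1 : {set T1}) (E2 : {set T2})
  : {set (T1 + T2)%type} := (@inl T1 T2 @: E1) :|: (@inr T1 T2 @: E2).
Definition dsum_indep (T1 T2 : finType) (E1 : {set T1}) (I1 : pred {set T1})
    (E2 : {set T2}) (I2 : pred {set T2}) : pred {set (T1 + T2)%type} :=
  fun X => [&& X \subset dsum_ground E1 E2,
              I1 [set x | @inl T1 T2 x \in X] & I2 [set y | @inr T1 T2 y \in X]].

Definition has_minor_iso (T T' : finType) (E : {set T}) (I : pred {set T})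
    (E' : {set T'}) (I' : pred {set T'}) : Prop :=
  exists C D : {set T},
    [/\ C \subset E, D \subset E, [disjoint C & D]
      & matroid_iso (minor_ground E C D) (minor_indep E I C D) E' I'].

Definition kl_uniform (k l : nat) (T : finType) (E : {set T}) (I : pred {set T}) : Prop :=
  ~ has_minor_iso E I
      (dsum_ground [set: 'I_k] [set: 'I_l])
      (dsum_indep [set: 'I_k] (@unif_indep k k) [set: 'I_l] (@unif_indep 0 l)).

(* Main.v *)
Require Import Defs.
From mathcomp Require Import all_boot.
From mathcomp Require Import zify.
Set Implicit Arguments. Unset Strict Implicit. Unset Printing Implicit Defensive.

Section Aux.
Variable T : finType.
Variable I : pred {set T}.

Lemma rk_ub (X Y : {set T}) : Y \subset X -> I Y -> #|Y| <= rk I X.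
Proof. by move=> sYX iY; apply: leq_bigmax_cond; rewrite sYX iY. Qed.

Lemma rk_le_card (X : {set T}) : rk I X <= #|X|.
Proof. by apply/bigmax_leqP => Y /andP[sYX _]; apply: subset_leq_card. Qed.

Lemma rk_wit (X : {set T}) : I set0 -> exists2 Y : {set T}, (Y \subset X) && I Y & #|Y| = rk I X.
Proof.
move=> I0; rewrite /rk (bigmax_eq_arg set0) ?sub0set ?I0 //.
by case: arg_maxnP; [rewrite sub0set I0 | move=> Y PY _; exists Y].
Qed.

Lemma rk_mono (X Z : {set T}) : X \subset Z -> rk I X <= rk I Z.
Proof.
move=> sXZ; apply/bigmax_leqP => Y /andP[sYX iY].
by apply: rk_ub => //; apply: subset_trans sXZ.
Qed.

Lemma rk_indep (X : {set T}) : I X -> rk I X = #|X|.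
Proof. by move=> iX; apply/eqP; rewrite eqn_leq rk_le_card rk_ub. Qed.

Lemma rk_full (X : {set T}) : I set0 -> rk I X = #|X| -> I X.
Proof.
move=> I0 h; have [Y /andP[sYX iY] cY] := rk_wit X I0.
suff -> : X = Y by [].
by apply/eqP; rewrite eq_sym eqEcard sYX cY h leqnn.
Qed.
End Aux.

Section Mat.
Variable T : finType.
Variable E : {set T}.
Variable I : pred {set T}.
Hypothesis hM : is_matroid E I.

Lemma I0 : I set0. Proof. by case: hM. Qed.
Lemma IE (X : {set T}) : I X -> X \subset E. Proof. by case: hM => _ h _ _; apply: h. Qed.
Lemma Isub (X Y : {set T}) : Y \subset X -> I X -> I Y. Proof. by case: hM => _ _ h _; apply: h. Qed.

Lemma circuit_sub (X : {set T}) : X \subset E -> ~~ I X -> exists2 Z : {set T}, Z \subset X & circuit E I Z.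
Proof.
move: {2}#|X| (leqnn #|X|) => n; elim: n X => [|n IH] X hn sXE nIX.
  move: hn; rewrite leqn0 cards_eq0 => /eqP X0.
  by rewrite X0 I0 in nIX.
case: (boolP [forall x in X, I (X :\ x)]) => [/forall_inP h|].
  by exists X => //; split.
case/forall_inPn => x xX nI.
have h1 : #|X :\ x| <= n by move: hn; rewrite (cardsD1 x X) xX.
have h2 : X :\ x \subset E by apply: subset_trans sXE; apply: subsetDl.
have [Z sZ cZ] := IH (X :\ x) h1 h2 nI.
by exists Z => //; apply: subset_trans sZ _; apply: subsetDl.
Qed.

Lemma simple_small (X : {set T}) : simple E I -> X \subset E -> #|X| <= 2 -> I X.
Proof.
move=> hs sXE cX; apply/negPn/negP => nIX.
have [Z sZ cZ] := circuit_sub sXE nIX.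
have := hs _ cZ; have := subset_leq_card sZ.
move=> a b; lia.
Qed.

Lemma simple_rk (C : {set T}) : simple E I -> C \subset E -> rk I C <= 1 -> I C.
Proof.
move=> hs sCE hr; apply/negPn/negP => nIC.
have [Z sZ cZ] := circuit_sub sCE nIC.
have Z3 := hs _ cZ.
have [z zZ] : exists z, z \in Z.
  by apply/set0Pn; rewrite -card_gt0; apply: leq_trans Z3.
case: cZ => _ _ /(_ z zZ) iZ.
have : #|Z :\ z| <= rk I C.
  by apply: rk_ub iZ; apply: subset_trans sZ; apply: subsetDl.
move: Z3; rewrite (cardsD1 z Z) zZ => Z3 h; lia.
Qed.

Lemma extend (K : {set T}) : I K -> exists A : {set T}, [/\ K \subset A, I A & #|A| = rk I E].
Proof.
have [B /andP[sBE iB] cB] := rk_wit E I0.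
move=> iK; move: {2}(#|B| - #|K|) (leqnn (#|B| - #|K|)) => n.
elim: n K iK => [|n IH] K iK hn.
  exists K; split => //; apply/eqP; rewrite eqn_leq rk_ub ?IE //=.
  have := rk_ub (IE iK) iK; lia.
case: (ltnP #|K| #|B|) => hKB; last first.
  exists K; split => //; apply/eqP; rewrite eqn_leq rk_ub ?IE //=.
  have := rk_ub (IE iK) iK; lia.
case: hM => _ _ _ /(_ K B iK iB hKB) [y /setDP[yB yK] iyK].
have hn' : #|B| - #|y |: K| <= n by move: hn; rewrite cardsU1 yK; lia.
have [A [sA iA cA]] := IH (y |: K) iyK hn'.
by exists A; split => //; apply: subset_trans sA; apply: subsetUr.
Qed.
End Mat.

Lemma dsumT k : dsum_ground [set: 'I_k] [set: 'I_1] = setT.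
Proof.
apply/setP => z; rewrite [in RHS]inE /dsum_ground; apply/setUP.
by case: z => a; [left | right]; apply: imset_f; rewrite inE.
Qed.

Lemma Iu_char k (X : {set ('I_k + 'I_1)%type}) :
  dsum_indep [set: 'I_k] (@unif_indep k k) [set: 'I_1] (@unif_indep 0 1) X
  = (inr ord0 \notin X).
Proof.
rewrite /dsum_indep dsumT subsetT /unif_indep /=.
have -> : #|[set x | inl x \in X]| <= k.
  by apply: leq_trans (max_card _) _; rewrite card_ord.
rewrite /= leqn0 cards_eq0.
case: (boolP (inr ord0 \in X)) => h /=.
  by apply/negbTE/set0Pn; exists ord0; rewrite inE.
by apply/eqP/setP => y; rewrite (ord1 y) inE (negbTE h) in_set0.
Qed.

Lemma fwd (T : finType) (E : {set T}) (I : pred {set T}) :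
  is_matroid E I -> 2 <= mrank E I ->
  simple E I -> kl_uniform (mrank E I).-1 1 E I.
Proof.
move=> hM hr hs [C [D [sCE sDE dCD [f [finj fim fI]]]]].
move: finj fim fI; set G := minor_ground E C D => finj fim fI.
rewrite dsumT in fim.
have : inr ord0 \in f @: G by rewrite fim inE.
case/imsetP => e eG fe.
have cG : #|G| = (mrank E I).-1.+1.
  by rewrite -(card_in_imset finj) fim cardsT card_sum !card_ord addn1.
set Y := G :\ e.
have sYG : Y \subset G := subsetDl _ _.
have sGE : G \subset E := subsetDl _ _.
have cY : #|Y| = (mrank E I).-1 by move: cG; rewrite (cardsD1 e G) eG add1n => -[].
have iY : minor_indep E I C D Y.
  rewrite fI // Iu_char; apply/imsetP => -[x xY fx].
  move: xY; rewrite in_setD1 => /andP[/eqP xe xG].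
  by apply: xe; apply: finj => //; rewrite -fx fe.
have niE : ~~ minor_indep E I C D [set e].
  by rewrite fI ?sub1set // imset_set1 Iu_char in_set1 -fe eqxx.
move: iY => /andP[_ /eqP h1].
move: niE; rewrite /minor_indep sub1set eG cards1 /= => /eqP h2.
have h3 : rk I (Y :|: C) <= rk I E.
  by apply: rk_mono; rewrite subUset sCE andbT; apply: subset_trans sGE.
have hC1 : rk I C <= 1 by move: h3 hr; rewrite h1 cY /mrank; lia.
have iC := simple_rk hM hs sCE hC1.
have eC : e \notin C by move: eG; rewrite /G /minor_ground !inE negb_or => /andP[/andP[]].
have eE : e \in E := subsetP sGE e eG.
have ieC : I (e |: C).
  apply: (simple_small hM hs); first by rewrite subUset sub1set eE.
  by rewrite cardsU1 eC; move: hC1; rewrite rk_indep.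
by apply: h2; rewrite !rk_indep // cardsU1 eC.
Qed.

Lemma bwd (T : finType) (E : {set T}) (I : pred {set T}) :
  is_matroid E I -> 2 <= mrank E I ->
  kl_uniform (mrank E I).-1 1 E I -> simple E I.
Proof.
move=> hM hr hk Cc cC; rewrite ltnNge; apply/negP => hC2; apply: hk.
have I0' := I0 hM.
case: cC => sCcE nICc hmin.
have [e eCc] : exists e, e \in Cc.
  apply/set0Pn; apply: contraNneq nICc => ->; exact: I0'.
set K := Cc :\ e.
have iK : I K := hmin e eCc.
have [A [sKA iA crA]] := extend hM iK.
have sAE := IE hM iA.
have cK : #|K| <= 1 by move: hC2; rewrite (cardsD1 e Cc) eCc.
have [c cA sKc] : exists2 c, c \in A & K \subset [set c].
  case: (set_0Vmem K) => [K0 | [c' c'K]].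
    have : 0 < #|A| by rewrite crA; move: hr; rewrite /mrank; lia.
    by rewrite card_gt0 => /set0Pn [c cA]; exists c; rewrite // K0 sub0set.
  exists c'; first exact: subsetP sKA c' c'K.
  apply/subsetP => x xK; rewrite in_set1; apply/eqP.
  by move/card_le1_eqP: cK => /(_ c' x c'K xK).
have CcKe : Cc = e |: K by rewrite setD1K.
have eA : e \notin A.
  apply: contraNN nICc => eA; apply: (Isub hM) iA.
  by rewrite CcKe subUset sub1set eA sKA.
have eE : e \in E := subsetP sCcE e eCc.
have cE : c \in E := subsetP sAE c cA.
have ce : c != e by apply: contraNneq eA => <-.
set S := A :\ c.
have cS : #|S| = (mrank E I).-1 by move: crA; rewrite (cardsD1 c A) cA /mrank add1n => <-.
pose h (x : T) : ('I_(mrank E I).-1 + 'I_1)%type :=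
  if insub (index x (enum S)) is Some i then inl i else inr ord0.
have hS x : x \in S -> exists2 i, h x = inl i & val i = index x (enum S).
  move=> xS; rewrite /h; case: insubP => [i _ vi | nP]; first by exists i.
  by move: nP; rewrite -cS cardE index_mem mem_enum xS.
pose f x := if x == e then inr ord0 else h x.
exists [set c], (E :\: (e |: A)); split.
- by rewrite sub1set.
- exact: subsetDl.
- by rewrite disjoints1 !inE cA orbT.
set G := minor_ground _ _ _.
have GE : G = e |: S.
  apply/setP => x; rewrite /G /minor_ground !inE.
  case: (x =P e) => [-> | _].
    by rewrite (negbTE eA) eE /= orbF andbT eq_sym.
  case: (x =P c) => [-> | _] //=; case xA : (x \in A) => /=.
    by rewrite (subsetP sAE x xA).
  by rewrite andNb.
have GeS x : x \in G -> x != e -> x \in S by rewrite GE !inE => /orP[->|].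
have finj : {in G &, injective f}.
  move=> x y xG yG; rewrite /f.
  case: (x =P e) => [-> | /eqP xe]; case: (y =P e) => [-> | /eqP ye] //.
  - by have [i -> _] := hS y (GeS y yG ye).
  - by have [i -> _] := hS x (GeS x xG xe).
  have xS := GeS x xG xe; have yS := GeS y yG ye.
  have [i -> vi] := hS x xS; have [j -> vj] := hS y yS.
  case=> ij.
  have hi : index x (enum S) = index y (enum S) by rewrite -vi -vj ij.
  have ex : nth x (enum S) (index x (enum S)) = x by apply: nth_index; rewrite mem_enum.
  have ey : nth x (enum S) (index y (enum S)) = y by apply: nth_index; rewrite mem_enum.
  by rewrite -ex hi ey.
exists f; split => //.
  rewrite dsumT; apply/eqP; rewrite eqEcard subsetT cardsT card_sum !card_ord.
  have eS : e \notin S by rewrite !inE (negbTE eA) andbF.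
  by rewrite (card_in_imset finj) GE cardsU1 eS cS addn1 /= add1n ltnSn.
move=> X sXG; rewrite Iu_char.
have ic : I [set c] by apply: (Isub hM) iA; rewrite sub1set.
have cX : c \notin X.
  by apply: contraNN ce => cX; move: (subsetP sXG c cX); rewrite GE !inE eqxx /= orbF.
have -> : minor_indep E I [set c] (E :\: (e |: A)) X = I (X :|: [set c]).
  rewrite /minor_indep sXG /= (rk_indep ic) cards1.
  apply/eqP/idP => [hh | hh]; last by rewrite rk_indep // setUC cardsU1 cX add1n addn1.
  by apply: (rk_full I0'); rewrite hh setUC cardsU1 cX add1n addn1.
case: (boolP (e \in X)) => eX.
  have -> : inr ord0 \in f @: X by apply/imsetP; exists e; rewrite // /f eqxx.
  apply/negbTE; apply: contraNN nICc => iXc; apply: (Isub hM) iXc.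
  rewrite CcKe subUset sub1set inE eX /=; apply: subset_trans sKc _; exact: subsetUr.
have -> : inr ord0 \in f @: X = false.
  apply/negbTE/imsetP => -[x xX]; rewrite /f; case: (x =P e) => [xe | /eqP xe].
    by move: eX; rewrite -xe xX.
  by have [i -> _] := hS x (GeS x (subsetP sXG x xX) xe).
apply: (Isub hM) iA; rewrite subUset sub1set cA andbT; apply/subsetP => x xX.
have xe : x != e by apply: contraNneq eX => <-.
by have := GeS x (subsetP sXG x xX) xe; rewrite !inE => /andP[].
Qed.

Theorem lemma2p2 (T : finType) (E : {set T}) (I : pred {set T}) :
  is_matroid E I -> 2 <= mrank E I ->
  (simple E I <-> kl_uniform (mrank E I).-1 1 E I).
Proof. by move=> hM hr; split; [apply: fwd | apply: bwd]. Qed.
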